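(* Let $\mathbf{k}=\mathbb{R}$ or $\mathbf{k}=\mathbb{C}$ and $n\geq2$. There exists a map $\rho\colon[-1,1]\to\mathrm{Bir}(\mathbb{P}^n_{\mathbf{k}})$, continuous for the Euclidean topologies, such that for arbitrarily small $\varepsilon>0$ and any $d\geq1$ there is no continuous map $\rho_\varepsilon\colon(-\varepsilon,\varepsilon)\to H_d(\mathbf{k})$ with $\rho|_{(-\varepsilon,\varepsilon)}=\pi_d\circ\rho_\varepsilon$.
   Context: For $d\geq1$, $W_d(\mathbf{k})$ is the projective space of classes $[h_0:\dots:h_n]$ of non-zero $(n+1)$-tuples of homogeneous polynomials of degree $d$ in $\mathbf{k}[x_0,\dots,x_n]$ modulo scalars, with its Euclidean topology; $H_d(\mathbf{k})\subset W_d(\mathbf{k})$ (subspace topology) is the set of $h$ such that $\psi_h\colon[x]\dashrightarrow[h_0(x):\dots:h_n(x)]$ is birational; $\pi_d\colon H_d(\mathbf{k})\to\mathrm{Bir}(\mathbb{P}^n_{\mathbf{k}})$, $h\mapsto\psi_h$, with image $\mathrm{Bir}(\mathbb{P}^n_{\mathbf{k}})_{\leq d}$ (maps of degree $\leq d$). The Euclidean topology on $\mathrm{Bir}(\mathbb{P}^n_{\mathbf{k}})_{\leq d}$ is the quotient topology via $\pi_d$, and on $\mathrm{Bir}(\mathbb{P}^n_{\mathbf{k}})$ the inductive limit topology of the $\mathrm{Bir}(\mathbb{P}^n_{\mathbf{k}})_{\leq d}$. *)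

(* Defs.v *)
From HB Require Import structures.
From mathcomp Require Import all_boot all_order all_algebra.
From mathcomp Require Import mpoly.
From mathcomp Require Import complex.
From mathcomp Require Import reals.

Set Implicit Arguments.
Unset Strict Implicit.
Unset Printing Implicit Defensive.

Import Order.TTheory GRing.Theory Num.Theory.
Local Open Scope ring_scope.

(* The ground field k: for a model R of the real numbers,
   k = R (b = false) or k = C = R[i] (b = true). *)
Definition kfld (R : realType) (b : bool) : numFieldType :=
  if b then (R[i] : numFieldType) else (R : numFieldType).

Section Defs.
Variables (K : numFieldType) (n : nat).

Definition tup := 'I_n.+1 -> {mpoly K[n.+1]}.

Definition homtup (d : nat) (h : tup) : Prop := forall i, h i \is d.-homog.
Definition nonzero (h : tup) : Prop := exists i, h i != 0.

Definition comp_tup (g h : tup) : tup :=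
  fun i => comp_mpoly [tuple h j | j < n.+1] (g i).

(* psi_h is birational: there is a polynomial tuple g (over k) with
   g o h = q . id and h o g = q' . id, q, q' nonzero polynomials,
   i.e. psi_g o psi_h = id = psi_h o psi_g as rational maps. *)
Definition birational (h : tup) : Prop :=
  exists (e : nat) (g : tup) (q q' : {mpoly K[n.+1]}),
    [/\ homtup e g, nonzero g, q != 0 /\ q' != 0,
        (forall i, comp_tup g h i = q * 'X_i)
      & (forall i, comp_tup h g i = q' * 'X_i)].

(* the point [h] of the projective space: the set of nonzero multiples of h *)
Definition proj_class (h : tup) : tup -> Prop :=
  fun h' => exists c : K, c != 0 /\ h' = (fun i => c *: h i).

Definition Wd (d : nat) :=
  {C : tup -> Prop | exists h, [/\ homtup d h, nonzero h & C = proj_class h]}.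

(* Euclidean topology on the space of nonzero tuples of degree-d forms,
   via the coefficients *)
Definition vopen (d : nat) (S : tup -> Prop) : Prop :=
  forall h, S h -> exists e : K, 0 < e /\
    forall h', homtup d h' -> nonzero h' ->
      (forall i m, `|(h' i)@_m - (h i)@_m| < e) -> S h'.

(* quotient topology on W_d(k) *)
Definition Wopen (d : nat) (U : Wd d -> Prop) : Prop :=
  vopen d (fun h => [/\ homtup d h, nonzero h &
                       exists w, U w /\ sval w = proj_class h]).

Definition Hd (d : nat) (w : Wd d) : Prop :=
  exists h, sval w = proj_class h /\ birational h.

(* subspace topology on H_d(k) *)
Definition Hopen (d : nat) (O : Wd d -> Prop) : Prop :=
  exists U : Wd d -> Prop, Wopen U /\ forall w, O w <-> U w /\ Hd w.

(* the rational map psi_h : the class of polynomial tuples defining the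
   same rational map as h *)
Definition rclass (h : tup) : tup -> Prop :=
  fun h' => [/\ exists e, homtup e h', nonzero h' &
              (forall i j, h i * h' j = h j * h' i)].

Definition Bir :=
  {C : tup -> Prop | exists (d : nat) (h : tup),
     [/\ (1 <= d)%N, homtup d h, nonzero h, birational h & C = rclass h]}.

(* graph of pi_d : W_d -> Bir (restricted to H_d): pi_d w = b *)
Definition pi_rel (d : nat) (w : Wd d) (b : Bir) : Prop :=
  exists h, [/\ homtup d h, nonzero h, sval w = proj_class h & sval b = rclass h].

Definition bir_le (d : nat) (b : Bir) : Prop := exists w : Wd d, Hd w /\ pi_rel w b.

Definition pi_pre (d : nat) (V : Bir -> Prop) (w : Wd d) : Prop :=
  Hd w /\ exists b, V b /\ pi_rel w b.

(* quotient topology on Bir_{<= d} *)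
Definition bir_le_open (d : nat) (V : Bir -> Prop) : Prop :=
  (forall b, V b -> bir_le d b) /\ @Hopen d (@pi_pre d V).

(* inductive limit topology on Bir *)
Definition bir_open (U : Bir -> Prop) : Prop :=
  forall d, (1 <= d)%N -> bir_le_open d (fun b => U b /\ bir_le d b).

End Defs.

Definition ropen (R : realType) (A : R -> Prop) : Prop :=
  forall x, A x -> exists e : R, 0 < e /\ forall y, `|y - x| < e -> A y.

Definition ropen_in (R : realType) (D : R -> Prop) (S : R -> Prop) : Prop :=
  exists U, ropen U /\ forall t, S t <-> U t /\ D t.

Definition bir_continuous_on (R : realType) (K : numFieldType) (n : nat)
  (D : R -> Prop) (rho : R -> Bir K n) : Prop :=
  forall U, bir_open U -> ropen_in D (fun t => D t /\ U (rho t)).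

Definition Hd_continuous_on (R : realType) (K : numFieldType) (n d : nat)
  (D : R -> Prop) (f : R -> Wd K n d) : Prop :=
  (forall t, D t -> Hd (f t)) /\
  forall O : Wd K n d -> Prop, Hopen O -> ropen_in D (fun t => D t /\ O (f t)).

(* Main.v *)
Require Import Defs.
From HB Require Import structures.
From mathcomp Require Import all_boot all_order all_algebra.
From mathcomp Require Import mpoly complex reals.
From mathcomp Require Import boolp classical_sets.
From mathcomp Require Import ring lra.
Set Implicit Arguments.
Unset Strict Implicit.
Unset Printing Implicit Defensive.
Import Order.TTheory GRing.Theory Num.Theory.
Local Open Scope ring_scope.
Section Real1.
Variable R : realType.
Implicit Types u v r s t : R.

Definition tri u : R := `|u - 2 * (Num.floor ((u + 1) / 2))%:~R|.

Lemma tri_def u : -1 <= u - 2 * (Num.floor ((u + 1) / 2))%:~R < 1.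
Proof.
have h1 := floor_le ((u + 1) / 2).
have h2 := floorD1_gt ((u + 1) / 2).
rewrite intrD in h2.
set k : R := (Num.floor ((u + 1) / 2))%:~R in h1 h2 *.
apply/andP; split; lra.
Qed.

Lemma tri_min u (j : int) : tri u <= `|u - 2 * j%:~R|.
Proof.
rewrite /tri; have := tri_def u.
set k := Num.floor ((u + 1) / 2) => /andP[h1 h2].
have [->|hne] := eqVneq j k; first by [].
have hjk : 1 <= `|(k - j)%:~R : R|.
  rewrite -intr_norm ler1z. 
  have : (k - j != 0) by rewrite subr_eq0 eq_sym.
  by rewrite -normr_gt0.
have -> : u - 2 * j%:~R = (u - 2 * k%:~R) + 2 * (k - j)%:~R.
  by rewrite intrB; ring.
set a := u - 2 * k%:~R in h1 h2 *.
have ha : `|a| <= 1 by rewrite ler_norml; apply/andP; split; lra.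
have := lerB_dist (2 * (k - j)%:~R) (- a).
rewrite opprK normrN normrM ger0_norm // addrC.
move=> hb; rewrite [a + _]addrC; lra.
Qed.

Lemma tri_lip u v : `|tri u - tri v| <= `|u - v|.
Proof.
have H : forall u v, tri u <= `|u - v| + tri v.
  move=> x y; apply: (le_trans (tri_min x (Num.floor ((y + 1) / 2)))).
  have -> : x - 2 * (Num.floor ((y + 1) / 2))%:~R
           = (x - y) + (y - 2 * (Num.floor ((y + 1) / 2))%:~R) by ring.
  exact: ler_normD.
rewrite ler_norml; apply/andP; split.
  have := H v u; rewrite distrC; lra.
have := H u v; lra.
Qed.

Lemma tri_range u : 0 <= tri u <= 1.
Proof.
rewrite /tri normr_ge0 /=; have /andP[h1 h2] := tri_def u.
rewrite ler_norml; apply/andP; split; lra.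
Qed.

Lemma tri_val (k : int) r : 0 <= r < 1 -> tri (2 * k%:~R + r) = r.
Proof.
move=> /andP[h1 h2]; rewrite /tri.
have -> : Num.floor ((2 * k%:~R + r + 1) / 2) = k.
  apply: floor_def; rewrite intrD; apply/andP; split; lra.
have -> : 2 * k%:~R + r - 2 * k%:~R = r by ring.
exact: ger0_norm.
Qed.

Definition beta t : R := tri t^-1.

Lemma beta_range t : 0 <= beta t <= 1.
Proof. exact: tri_range. Qed.

Lemma beta_hit (d r : R) : 0 < d -> 0 <= r < 1 ->
  exists s, 0 < s < d /\ beta s = r.
Proof.
move=> hd /andP[hr1 hr2].
set N := Num.Def.archi_bound (d^-1).
have hN : d^-1 < N%:R by apply: archi_boundP; rewrite invr_ge0 ltW.
set u : R := 2 * (N%:Z)%:~R + r.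
have hN0 : 0 <= N%:R :> R by [].
have hNu : N%:R <= u.
  rewrite /u; have -> : (N%:Z)%:~R = N%:R :> R by [].
  lra.
have hu : d^-1 < u by lra.
have hu0 : 0 < u by have := invr_gt0 d; rewrite hd /=; lra.
exists u^-1; split; last by rewrite /beta invrK /u tri_val ?hr1.
rewrite invr_gt0 hu0 /=.
by rewrite -(invrK d) ltf_pV2 // ?posrE ?invr_gt0.
Qed.

Lemma beta_cont t e : t != 0 -> 0 < e ->
  exists d, 0 < d /\ forall s, `|s - t| < d -> `|beta s - beta t| < e.
Proof.
move=> ht he.
have hta : 0 < `|t| by rewrite normr_gt0.
exists (Num.min (`|t| / 2) (e * (`|t| * `|t|) / 2)); split.
  by rewrite lt_min !divr_gt0 ?mulr_gt0.
move=> s; rewrite lt_min => /andP[hs1 hs2].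
apply: (le_lt_trans (tri_lip _ _)).
have hsa : `|t| / 2 < `|s|.
  have := lerB_dist t s; rewrite distrC; lra.
have hs0 : s != 0 by rewrite -normr_gt0; apply: lt_trans hsa; rewrite divr_gt0.
have -> : s^-1 - t^-1 = (t - s) / (s * t).
  by field; apply/andP; split.
rewrite normrM normfV normrM distrC.
rewrite ltr_pdivrMr ?mulr_gt0 ?normr_gt0 //.
apply: (lt_le_trans hs2).
have : e * (`|t| * `|t|) / 2 <= e * (`|s| * `|t|).
  rewrite -mulrA ler_pM2l //.
  have : `|t| * `|t| / 2 = (`|t| / 2) * `|t| by ring.
  move=> ->; rewrite ler_pM2r //; exact: ltW.
by [].
Qed.

End Real1.
Section Compact.
Variable R : realType.
Lemma compact01 (P : R -> R -> Prop) :
  (forall b e e', 0 < e' -> e' <= e -> P b e -> P b e') ->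
  (forall b, 0 <= b <= 1 -> exists r, 0 < r /\
      forall b', 0 <= b' <= 1 -> `|b' - b| < r -> P b' r) ->
  exists e, 0 < e /\ forall b, 0 <= b <= 1 -> P b e.
Proof.
move=> Pmono Ploc.
pose A : set R := fun s => 0 <= s <= 1 /\
   exists e, 0 < e /\ forall b, 0 <= b <= s -> P b e.
have A0 : A 0.
  split; first by rewrite lexx ler01.
  have [r [hr Hr]] := Ploc 0 (ltac:(by rewrite lexx ler01)).
  exists r; split => // b /andP[hb1 hb2].
  have hb : b = 0 by apply/eqP; rewrite eq_le hb1 hb2.
  by rewrite hb; apply: Hr; rewrite ?lexx ?ler01 // subrr normr0.
have hsA : has_sup A.
  split; first by exists 0.
  by exists 1 => y [/andP[_ ?] _].
set sg := sup A.
have sg0 : 0 <= sg by apply: sup_upper_bound.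
have sg1 : sg <= 1.
  by apply: ge_sup; [exists 0 | move=> y [/andP[_ ?] _]].
have [r [hr Hr]] := Ploc sg (ltac:(by rewrite sg0 sg1)).
have [s [/andP[hs0 hs1] [eta [heta Heta]]] hs] := sup_adherent hr hsA.
rewrite -/sg in hs.
have As' : forall s', 0 <= s' <= 1 -> s' <= sg + r / 2 -> A s'.
  move=> s' hs' hs'r; split => //.
  exists (Num.min eta r); split; first by rewrite lt_min heta hr.
  move=> b /andP[hb0 hb1].
  have [hbs|hbs] := leP b s.
    apply: (Pmono _ eta).
    - by rewrite lt_min heta hr.
    - by rewrite ge_min lexx.
    by apply: Heta; rewrite hb0 hbs.
  apply: (Pmono _ r).
  - by rewrite lt_min heta hr.
  - by rewrite ge_min lexx orbT.
  move: hs' => /andP[_ hs'1].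
  apply: (Hr b); first by rewrite hb0 (le_trans hb1 hs'1).
  rewrite ltr_norml; apply/andP; split; lra.
have [h|h] := leP (sg + r / 2) 1.
  have : A (sg + r / 2).
    apply: As' => //; rewrite h andbT addr_ge0 // divr_ge0 // ltW //.
  move/(sup_upper_bound hsA); rewrite -/sg; lra.
have := As' 1 (ltac:(by rewrite ler01 lexx)) (ltW h).
move=> [_ [e [he He]]].
exists e; split => // b hb; exact: He.
Qed.
End Compact.
Section Poly.
Variables (K : numFieldType) (n : nat).
Hypothesis hn : (2 <= n)%N.

Local Notation MP := {mpoly K[n.+1]}.

Definition i0 : 'I_n.+1 := ord0.
Definition i1 : 'I_n.+1 := inord 1.
Definition iN : 'I_n.+1 := ord_max.

Lemma i1_val : (i1 : nat) = 1%N.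
Proof. by rewrite /i1 inordK // ltnS (leq_trans _ hn). Qed.

Lemma i0N : (i0 == iN) = false.
Proof. by apply/negbTE; rewrite -val_eqE /= neq_ltn (leq_trans _ hn). Qed.
Lemma i1N : (i1 == iN) = false.
Proof. by apply/negbTE; rewrite -val_eqE /= i1_val neq_ltn hn. Qed.
Lemma i01 : (i0 == i1) = false.
Proof. by apply/negbTE; rewrite -val_eqE /= i1_val. Qed.

Definition lin (b : K) : MP := 'X_i0 - b%:MP * 'X_i1.
Definition EE (i : 'I_n.+1) : MP := if i == iN then 'X_i1 ^+ 2 else 0.
Definition hh (b c : K) : tup K n := fun i => lin b * 'X_i + c%:MP * EE i.

Lemma EE0 : EE i0 = 0. Proof. by rewrite /EE i0N. Qed.
Lemma EE1 : EE i1 = 0. Proof. by rewrite /EE i1N. Qed.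

Lemma nth_tup (h : tup K n) (i : 'I_n.+1) :
  [tuple h j | j < n.+1]`_i = h i.
Proof. by rewrite -tnth_nth tnth_mktuple. Qed.

Lemma comp_X (h : tup K n) i : comp_mpoly [tuple h j | j < n.+1] 'X_i = h i.
Proof. by rewrite comp_mpolyXU nth_tup. Qed.

Lemma comp_lin b (h : tup K n) :
  comp_mpoly [tuple h j | j < n.+1] (lin b) = h i0 - b%:MP * h i1.
Proof. by rewrite /lin rmorphB rmorphM /= comp_mpolyC !comp_X. Qed.

Lemma comp_EE (h : tup K n) i :
  comp_mpoly [tuple h j | j < n.+1] (EE i) = if i == iN then h i1 ^+ 2 else 0.
Proof. by rewrite /EE; case: ifP => _; rewrite ?rmorphXn /= ?comp_X // raddf0. Qed.

Lemma comp_hh b c c' i :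
  comp_tup (hh b c') (hh b c) i = (lin b) ^+ 3 * 'X_i + (c + c')%:MP * (lin b ^+ 2 * EE i).
Proof.
rewrite /comp_tup /hh rmorphD /= !rmorphM /= comp_lin comp_mpolyC comp_X comp_EE.
rewrite EE0 EE1 !mulr0 !addr0.
have -> : lin b * 'X_i0 - b%:MP * (lin b * 'X_i1) = lin b * lin b by rewrite /lin; ring.
have -> : (c + c')%:MP = c%:MP + c'%:MP :> MP by rewrite raddfD.
rewrite /EE; case: (i == iN); ring.
Qed.

Lemma comp_hhN b c i :
  comp_tup (hh b (- c)) (hh b c) i = (lin b) ^+ 3 * 'X_i.
Proof. by rewrite comp_hh addrN mul0r addr0. Qed.

Lemma comp_hhN' b c i :
  comp_tup (hh b c) (hh b (- c)) i = (lin b) ^+ 3 * 'X_i.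
Proof. by rewrite comp_hh addNr mul0r addr0. Qed.

Lemma lin_coef b : (lin b)@_U_(i0) = 1.
Proof.
by rewrite /lin mcoeffB mcoeffCM !mcoeffXU eqxx eq_sym i01 mulr0 subr0.
Qed.

Lemma lin_neq0 b : lin b != 0.
Proof. by apply/eqP => h; have := lin_coef b; rewrite h mcoeff0 => /eqP; rewrite eq_sym oner_eq0. Qed.

Lemma X_neq0 (i : 'I_n.+1) : ('X_i : MP) != 0.
Proof. by apply/eqP => h; have := @mcoeffXU n.+1 K i i; rewrite h mcoeff0 eqxx => /eqP; rewrite eq_sym oner_eq0. Qed.

Lemma homX (i : 'I_n.+1) : ('X_i : MP) \is 1.-homog.
Proof. by rewrite dhomogX /= mdeg1. Qed.

Lemma hom_lin b : lin b \is 1.-homog.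
Proof. by rewrite /lin rpredB ?homX // mul_mpolyC dhomogZ // homX. Qed.

Lemma hom_EE i : EE i \is 2.-homog.
Proof. by rewrite /EE; case: ifP => _; [exact: (dhomogMn 2 (homX i1)) | exact: dhomog0]. Qed.

Lemma homtup_hh b c : homtup 2 (hh b c).
Proof.
move=> i; rewrite /hh rpredD //; first exact: (dhomogM (hom_lin b) (homX i)).
by rewrite mul_mpolyC dhomogZ // hom_EE.
Qed.

Lemma hh0 b c : hh b c i0 = lin b * 'X_i0.
Proof. by rewrite /hh EE0 mulr0 addr0. Qed.

Lemma nonzero_hh b c : nonzero (hh b c).
Proof. by exists i0; rewrite hh0 mulf_neq0 ?lin_neq0 ?X_neq0. Qed.

Lemma birational_hh b c : birational (hh b c).
Proof.
exists 2%N, (hh b (- c)), (lin b ^+ 3), (lin b ^+ 3); split.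
- exact: homtup_hh.
- exact: nonzero_hh.
- by split; rewrite expf_neq0 // lin_neq0.
- exact: comp_hhN.
- exact: comp_hhN'.
Qed.

End Poly.
Section Basic.
Variables (K : numFieldType) (n : nat).
Local Notation MP := {mpoly K[n.+1]}.
Implicit Types h g : tup K n.

Lemma sig_eq (T : Type) (P : T -> Prop) (x y : {a : T | P a}) :
  sval x = sval y -> x = y.
Proof.
case: x y => [a Ha] [b Hb] /= hab; subst b.
by rewrite (Prop_irrelevance Ha Hb).
Qed.

Lemma proj_refl h : proj_class h h.
Proof. by exists 1; split; [exact: oner_neq0 | apply: funext => i; rewrite scale1r]. Qed.

Lemma proj_eq h h' : proj_class h = proj_class h' ->
  exists c : K, c != 0 /\ h' = (fun i => c *: h i).
Proof. by move=> e; have := proj_refl h'; rewrite -e. Qed.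

Lemma rclass_refl e h : homtup e h -> nonzero h -> rclass h h.
Proof. by move=> H1 H2; split => //; [exists e | move=> i j; rewrite mulrC]. Qed.

Lemma rclass_scale c h : c != 0 -> rclass (fun i => c *: h i) = rclass h.
Proof.
move=> hc; apply: funext => h'; apply: propext; rewrite /rclass.
split=> -[H1 H2 H3]; split => // i j.
  by apply: (scalerI hc); rewrite !scalerAl H3.
by rewrite -!scalerAl H3.
Qed.

Lemma rclass_mulf f h : f != 0 -> rclass (fun i => f * h i) = rclass h.
Proof.
move=> hf; apply: funext => h'; apply: propext; rewrite /rclass.
split=> -[H1 H2 H3]; split => // i j.
  by apply: (mulfI hf); rewrite !mulrA H3.
by rewrite -!mulrA H3.
Qed.

Lemma rclass_rel h h' : rclass h = rclass h' -> (exists e, homtup e h) -> nonzero h ->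
  forall i j, h' i * h j = h' j * h i.
Proof.
move=> E [e He] Hnz; have : rclass h h by exact: (rclass_refl He Hnz).
by rewrite E => -[].
Qed.

Lemma pi_rel_uniq d (w : Wd K n d) (b b' : Bir K n) :
  pi_rel w b -> pi_rel w b' -> b = b'.
Proof.
move=> [h [H1 H2 H3 H4]] [h' [H1' H2' H3' H4']].
apply: sig_eq; rewrite H4 H4'.
have [c [hc ->]] := proj_eq (etrans (esym H3) H3').
by rewrite rclass_scale.
Qed.

Definition wcls d h (H1 : homtup d h) (H2 : nonzero h) : Wd K n d :=
  exist _ (proj_class h) (ex_intro _ h (And3 H1 H2 erefl)).

Definition bcls d h (H0 : (1 <= d)%N) (H1 : homtup d h) (H2 : nonzero h)
  (H3 : birational h) : Bir K n :=
  exist _ (rclass h) (ex_intro _ d (ex_intro _ h (And5 H0 H1 H2 H3 erefl))).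

Lemma wcls_eq d h H1 H2 (w : Wd K n d) : sval w = proj_class h -> w = @wcls d h H1 H2.
Proof. by move=> e; apply: sig_eq. Qed.

Lemma birational_0 h : birational h -> h ord0 != 0.
Proof.
move=> [e [g [q [q' [Hg Hgnz [_ Hq'] _ Hhg]]]]].
apply/negP => /eqP h0.
have := Hhg ord0; rewrite /comp_tup h0 comp_mpoly0 => /esym /eqP.
rewrite mulf_eq0 (negbTE Hq') /=.
apply/negP/eqP => hx; have := @mcoeffXU n.+1 K ord0 ord0.
by rewrite hx mcoeff0 eqxx => /eqP; rewrite eq_sym oner_eq0.
Qed.

End Basic.
Lemma enc_inj (k N : nat) (a b : 'I_k -> nat) :
  (forall i, (a i < N)%N) -> (forall i, (b i < N)%N) ->
  (\sum_(i < k) a i * N ^ i = \sum_(i < k) b i * N ^ i)%N -> a =1 b.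
Proof.
elim: k a b => [|k IH] a b Ha Hb E i; first by case: i.
move: E; rewrite !big_ord_recl /= !expn0 !muln1.
have Hs : forall c : 'I_k.+1 -> nat,
    (\sum_(i < k) c (lift ord0 i) * N ^ (bump 0 i) =
     N * \sum_(i < k) c (lift ord0 i) * N ^ i)%N.
  move=> c; rewrite big_distrr /=; apply: eq_bigr => j _.
  by rewrite /bump /= add1n expnS mulnCA.
rewrite !Hs => E.
have HN : (0 < N)%N by apply: leq_ltn_trans (Ha ord0).
have E0 : a ord0 = b ord0.
  have := congr1 (fun x => x %% N)%N E.
  have md : forall x y, ((x + N * y) %% N = x %% N)%N.
    by move=> x y; rewrite mulnC addnC modnMDl.
  by rewrite /= !md !modn_small ?Ha ?Hb.
move: E; rewrite E0 => /addnI /eqP; rewrite eqn_mul2l (negbTE (lt0n_neq0 HN)) /= => /eqP E.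
have IH' := IH (fun j => a (lift ord0 j)) (fun j => b (lift ord0 j))
   (fun j => Ha _) (fun j => Hb _) E.
by case: (unliftP ord0 i) => [j ->|->] //; exact: IH'.
Qed.

Section Kron.
Variables (R : realType) (K : numFieldType) (io : {rmorphism R -> K}) (n : nat).
Variable p : {mpoly K[n.+1]}.

Let N := (msize p).+2.
Definition enc (m : 'X_{1..n.+1}) : nat := (\sum_(i < n.+1) m i * N ^ i)%N.
Definition Qp : {poly K} := \sum_(m <- msupp p) p@_m *: 'X^(enc m).

Lemma Qp_eval (y : K) : Qp.[y] = p.@[fun i => y ^+ (N ^ i)].
Proof.
rewrite /Qp horner_sum mevalE; apply: eq_bigr => m _.
rewrite hornerZ hornerXn; congr (_ * _); rewrite /enc expr_sum.
by apply: eq_bigr => i _; rewrite -exprM mulnC.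
Qed.

Lemma supp_small m i : m \in msupp p -> (m i < N)%N.
Proof.
move=> hm; have h2 := msize_mdeg_lt hm.
have h1 : (m i <= mdeg m)%N by rewrite mdegE (bigD1 i) //= leq_addr.
by apply: ltn_trans (leq_ltn_trans h1 h2) _; rewrite ltnS leqnSn.
Qed.

Lemma Qp_neq0 : p != 0 -> Qp != 0.
Proof.
move=> hp; set m0 := mlead p.
have hm0 : m0 \in msupp p by exact: mlead_supp.
apply/eqP => /(congr1 (fun q : {poly K} => q`_(enc m0))).
rewrite coef0 /Qp coef_sum (bigD1_seq m0) //= ?msupp_uniq // coefZ coefXn eqxx mulr1.
rewrite big_seq_cond big1 ?addr0.
  by move/eqP; rewrite mleadc_eq0 (negbTE hp).
move=> m /andP[hm hne]; rewrite coefZ coefXn.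
case: eqP => [he|]; last by rewrite mulr0.
exfalso; move/negP: hne; apply; apply/eqP/mnmP.
apply: (@enc_inj n.+1 N (fun i => m i) (fun i => m0 i)).
- by move=> i; exact: supp_small.
- by move=> i; exact: supp_small.
exact: (esym he).
Qed.

Lemma nonroot : p != 0 -> exists x : R, 1 < x /\
  p.@[fun i => io x ^+ (N ^ i)] != 0.
Proof.
move=> hp; have hQ := Qp_neq0 hp.
set rs := [seq io (k.+2)%:R | k <- iota 0 (size Qp)].
have : ~~ all (root Qp) rs.
  apply/negP => hall.
  have hu : uniq rs.
    rewrite /rs map_inj_uniq ?iota_uniq // => k1 k2 /fmorph_inj /eqP.
    by rewrite eqr_nat => /eqP [].
  by have := max_poly_roots hQ hall hu; rewrite /rs size_map size_iota ltnn.
case/allPn => y /mapP [k _ ->] hy.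
exists (k.+2)%:R; split; first by rewrite ltr1n.
by rewrite -Qp_eval.
Qed.

Lemma N_ge2 : (2 <= N)%N. Proof. by []. Qed.

End Kron.
Section EvalOpen.
Variables (K : numFieldType) (n d : nat) (v : 'I_n.+1 -> K).
Local Notation MP := {mpoly K[n.+1]}.

Lemma homog_msize (q : MP) : q \is d.-homog -> (msize q <= d.+1)%N.
Proof.
move=> hq; rewrite msizeE; apply/bigmax_leqP_seq => m hm _.
by rewrite (dhomog_mf hq hm).
Qed.

Definition vm (m : 'X_{1..n.+1}) : K := \prod_(i < n.+1) v i ^+ m i.

Lemma meval_homog (q : MP) : q \is d.-homog ->
  q.@[v] = \sum_(m : 'X_{1..n.+1 < d.+1}) q@_m * vm m.
Proof.
move=> hq; rewrite {1}(mpolywE (homog_msize hq)) raddf_sum /=.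
by apply: eq_bigr => m _; rewrite mevalZ mevalX.
Qed.

Lemma eval_open (p : MP) : p \is d.-homog -> p.@[v] != 0 ->
  exists e : K, 0 < e /\ forall p' : MP, p' \is d.-homog ->
    (forall m, `|p'@_m - p@_m| < e) -> p'.@[v] != 0.
Proof.
move=> hp hv.
set M := \sum_(m : 'X_{1..n.+1 < d.+1}) `|vm m|.
have hM : 0 <= M by apply: sumr_ge0 => m _; exact: normr_ge0.
have hM1 : M + 1 != 0 by rewrite gt_eqF // ltr_wpDl.
have hM1p : 0 < M + 1 by rewrite ltr_wpDl.
exists (`|p.@[v]| / (M + 1)); split.
  by rewrite divr_gt0 // normr_gt0.
set e := `|p.@[v]| / (M + 1).
move=> p' hp' hc; apply/negP => /eqP h0.
have H1 : `|p'.@[v] - p.@[v]| <= e * M.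
  rewrite (meval_homog hp) (meval_homog hp') -sumrB.
  apply: (le_trans (ler_norm_sum _ _ _)).
  rewrite /M mulr_sumr; apply: ler_sum => m _.
  rewrite -mulrBl normrM; apply: ler_wpM2r; first exact: normr_ge0.
  exact: ltW.
have H2 : e * M < `|p.@[v]|.
  have -> : `|p.@[v]| = e * (M + 1) by rewrite /e divfK.
  by rewrite ltr_pM2l ?ltrDl ?ltr01 // divr_gt0 // normr_gt0.
move: H1; rewrite h0 sub0r normrN => H1.
by have := le_lt_trans H1 H2; rewrite ltxx.
Qed.
End EvalOpen.
Section Close.
Variables (K : numFieldType) (n : nat).
Hypothesis hn : (2 <= n)%N.

Lemma norm_natb (bb : bool) : `|(bb%:R : K)| <= 1.
Proof. by case: bb; rewrite ?normr1 ?normr0 ?ler01. Qed.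

Lemma hh_coef_close (b c b' c' : K) i m :
  `|(@hh K n b' c' i)@_m - (@hh K n b c i)@_m| <= `|b - b'| + `|c' - c|.
Proof.
have -> : (@hh K n b' c' i)@_m - (@hh K n b c i)@_m =
   (b - b') * ('X_[U_(i1 n) + U_(i)] : {mpoly K[n.+1]})@_m + (c' - c) * (@EE K n i)@_m.
  rewrite -mcoeffB -!mcoeffCM -mcoeffD; congr (mcoeff m _).
  rewrite /hh /lin mpolyXD !raddfB /=; ring.
apply: (le_trans (ler_normD _ _)); apply: lerD.
  rewrite normrM -{2}[`|b - b'|]mulr1 ler_wpM2l ?normr_ge0 //.
  by rewrite mcoeffX norm_natb.
rewrite normrM -{2}[`|c' - c|]mulr1 ler_wpM2l ?normr_ge0 //.
rewrite /EE; case: ifP => _; last by rewrite mcoeff0 normr0 ler01.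
by rewrite mpolyXn mcoeffX norm_natb.
Qed.

End Close.
Section Main.
Variables (R : realType) (K : numFieldType) (io : {rmorphism R -> K}) (n : nat).
Hypothesis Hnorm : forall x, `|io x| = io `|x|.
Hypothesis Hlt : forall x y, (io x < io y) = (x < y).
Hypothesis Hpos : forall e : K, 0 < e -> exists d : R, 0 < d /\ io d = e.
Hypothesis hn : (2 <= n)%N.

Definition wT (b c : K) : Wd K n 2 := wcls (homtup_hh b c) (nonzero_hh hn b c).
Definition bT (b c : K) : Bir K n :=
  bcls (isT : (0 < 2)%N) (homtup_hh b c) (nonzero_hh hn b c) (birational_hh hn b c).

Lemma pi_rel_T b c : pi_rel (wT b c) (bT b c).
Proof. by exists (hh b c); split => //; [exact: homtup_hh | exact: nonzero_hh]. Qed.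

Lemma Hd_T b c : Hd (wT b c).
Proof. by exists (hh b c); split => //; exact: birational_hh. Qed.

Lemma bT0 b b' : bT b 0 = bT b' 0.
Proof.
apply: sig_eq => /=.
have E : forall b0, @hh K n b0 0 = (fun i => lin n b0 * 'X_i).
  by move=> b0; apply: funext => i; rewrite /hh mpolyC0 mul0r addr0.
rewrite !E !rclass_mulf // ?lin_neq0 //.
Qed.

Lemma step (U : Bir K n -> Prop) b c : bir_open U -> U (bT b c) ->
  exists e : K, 0 < e /\ forall b' c', `|b - b'| + `|c' - c| < e -> U (bT b' c').
Proof.
move=> HU Ub.
have [_ [U' [HU' Hiff]]] := HU 2%N isT.
have F1 : U' (wT b c).
  apply: (proj1 (proj1 (Hiff (wT b c)) _)).
  split; first exact: Hd_T.
  exists (bT b c); split; last exact: pi_rel_T.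
  by split => //; exists (wT b c); split; [exact: Hd_T | exact: pi_rel_T].
have F2 : forall b' c', U' (wT b' c') -> U (bT b' c').
  move=> b' c' HU'w.
  have [_ [b0 [[Ub0 _] Hpr]]] := proj2 (Hiff (wT b' c')) (conj HU'w (Hd_T b' c')).
  by rewrite -(pi_rel_uniq Hpr (pi_rel_T b' c')).
have [e [he He]] := HU' (hh b c) (And3 (homtup_hh b c) (nonzero_hh hn b c)
   (ex_intro _ (wT b c) (conj F1 erefl))).
exists e; split => // b' c' hbc.
have [_ _ [w [Uw Ew]]] := He (hh b' c') (homtup_hh b' c') (nonzero_hh hn b' c')
   (fun i m => le_lt_trans (hh_coef_close _ _ _ _ i m) hbc).
have E := wcls_eq (homtup_hh b' c') (nonzero_hh hn b' c') Ew.
by apply: F2; rewrite /wT -E.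
Qed.

Definition rhoT (t : R) : Bir K n := bT (io (beta t)) (io t).

Lemma io_dist (x y : R) : `|io x - io y| = io `|x - y|.
Proof. by rewrite -rmorphB Hnorm. Qed.

Lemma core (U : Bir K n -> Prop) t : bir_open U -> U (rhoT t) ->
  exists d : R, 0 < d /\ forall s, `|s - t| < d -> U (rhoT s).
Proof.
move=> HU Ut.
have [ht|ht] := eqVneq t 0.
  subst t.
  have U0 : forall bb : K, U (bT bb 0).
    by move=> bb; move: Ut; rewrite /rhoT rmorph0 (bT0 _ bb).
  pose P (bb eta : R) := forall c : R, `|c| < eta -> U (bT (io bb) (io c)).
  have [eta [heta Heta]] : exists eta, 0 < eta /\ forall bb, 0 <= bb <= 1 -> P bb eta.
    apply: compact01.
      move=> bb e1 e2 _ h12 HP c hc; apply: HP; exact: lt_le_trans hc h12.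
    move=> bb _.
    have [e [he He]] := step HU (U0 (io bb)).
    have [de [hde Ede]] := Hpos he.
    exists (de / 2); split; first by rewrite divr_gt0.
    move=> bb' _ hbb c hc; apply: He.
    rewrite subr0 io_dist Hnorm -rmorphD -Ede Hlt distrC.
    have -> : de = de / 2 + de / 2 by rewrite -splitr.
    exact: ltrD.
  exists eta; split => // s; rewrite subr0 => hs.
  exact: (Heta _ (beta_range s)).
have [e [he He]] := step HU Ut.
have [de [hde Ede]] := Hpos he.
have [d1 [hd1 Hd1]] := beta_cont ht (ltac:(by rewrite divr_gt0) : 0 < de / 2).
exists (Num.min d1 (de / 2)); split; first by rewrite lt_min hd1 divr_gt0.
move=> s; rewrite lt_min => /andP[hs1 hs2].
apply: He; rewrite !io_dist -rmorphD -Ede Hlt.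
have -> : de = de / 2 + de / 2 by rewrite -splitr.
by apply: ltrD => //; rewrite distrC; apply: Hd1.
Qed.

Lemma rho_cont : bir_continuous_on (fun t : R => -1 <= t <= 1) rhoT.
Proof.
move=> U HU; exists (fun t => U (rhoT t)); split.
  move=> t Ut; have [d [hd Hd]] := core HU Ut.
  by exists d; split.
by move=> t; split => -[].
Qed.

Lemma no_lift (eps : R) (d : nat) : 0 < eps ->
  ~ exists rho_eps : R -> Wd K n d,
      Hd_continuous_on (fun t : R => - eps < t < eps) rho_eps /\
      forall t : R, - eps < t < eps -> pi_rel (rho_eps t) (rhoT t).
Proof.
move=> heps [rho_eps [[HHd Hcont] Hpi]].
have D0 : - eps < 0 < eps by rewrite oppr_lt0 heps.
set w0 := rho_eps 0.
have [h'' [Hs'' Hb'']] := HHd 0 D0.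
have [h0 [Hh0 Hnz0 Hs0]] := proj2_sig w0.
have [c0 [hc0 Eh0]] := proj_eq (etrans (esym Hs'') Hs0).
have hp0 : h0 ord0 != 0 by rewrite Eh0 scaler_eq0 negb_or hc0 birational_0.
have [x [hx1 hxv]] := nonroot io hp0.
set N := (msize (h0 ord0)).+2 in hxv.
set v := fun i : 'I_n.+1 => io x ^+ (N ^ i) in hxv.
have [e [he He]] := eval_open (Hh0 ord0) hxv.
pose O' := fun w : Wd K n d => exists h, sval w = proj_class h /\ (h ord0).@[v] != 0.
have HO' : Wopen O'.
  move=> h [Hh Hnz [w [[h2 [Ew2 Hv2]] Ew]]].
  have [c [hc Eh]] := proj_eq (etrans (esym Ew2) Ew).
  have hv : (h ord0).@[v] != 0 by rewrite Eh mevalZ mulf_neq0.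
  have [e' [he' He']] := eval_open (Hh ord0) hv.
  exists e'; split => // h' Hh' Hnz' Hc.
  split => //; exists (wcls Hh' Hnz'); split => //.
  by exists h'; split => //; apply: He' => // m; apply: Hc.
have [W [HW HiffW]] := Hcont (fun w => O' w /\ Hd w)
   (ex_intro _ O' (conj HO' (fun w => iff_refl _))).
have W0 : W 0.
  have := proj1 (HiffW 0); case => //; split => //; split; last exact: HHd.
  by exists h0; split.
have [dl [hdl Hdl]] := HW 0 W0.
have hx0 : 0 < x by apply: lt_trans hx1.
have hxN : x < x ^+ N.
  have -> : N = (msize (h0 ord0)).+2 by [].
  rewrite exprS -[X in X < _]mulr1 ltr_pM2l // exprS.
  by apply: (lt_le_trans hx1); rewrite -[X in X <= _]mulr1 ler_wpM2l ?(ltW hx0) // exprn_ege1 // ltW.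
have hxN0 : 0 < x ^+ N by rewrite exprn_gt0.
set r := x / x ^+ N.
have hr : 0 <= r < 1.
  by rewrite /r divr_ge0 ?ltW //= ltr_pdivrMr // mul1r.
have hmin : 0 < Num.min dl eps by rewrite lt_min hdl heps.
have [s [/andP[hs0 hs1] hbs]] := beta_hit hmin hr.
move: hs1; rewrite lt_min => /andP[hsd hse].
have Ds : - eps < s < eps by rewrite hse andbT (lt_trans _ hs0) // oppr_lt0.
have Ws : W s by apply: Hdl; rewrite subr0 ger0_norm // ltW.
have [[h2 [Ew2 Hv2]] _] := proj2 (proj2 (HiffW s) (conj Ws Ds)).
have [h' [Hh' Hnz' Es' Eb']] := Hpi s Ds.
have Eb : rclass (@hh K n (io (beta s)) (io s)) = rclass h' by rewrite -Eb'.
have Rel := rclass_rel Eb (ex_intro _ 2%N (homtup_hh _ _)) (nonzero_hh hn _ _).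
have := congr1 (meval v) (Rel ord0 (iN n)).
rewrite !mevalM.
have hv0 : v ord0 = io x by rewrite /v expn0 expr1.
have hv1 : v (i1 n) = io x ^+ N by rewrite /v (i1_val hn) expn1.
have hlin : (lin n (io (beta s))).@[v] = 0.
  rewrite /lin mevalB mevalM mevalC !mevalXU hbs hv0 hv1 /r rmorphM rmorphV ?unitfE ?gt_eqF //.
  rewrite rmorphXn -mulrA mulVf ?mulr1 ?subrr //.
  by rewrite expf_neq0 // fmorph_eq0 gt_eqF.
have hT0 : (@hh K n (io (beta s)) (io s) ord0).@[v] = 0.
  by rewrite (hh0 hn) mevalM hlin mul0r.
have hTN : (@hh K n (io (beta s)) (io s) (iN n)).@[v] != 0.
  rewrite /hh mevalD !mevalM hlin mul0r add0r /EE eqxx mevalC expr2 mevalM mevalXU hv1.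
  have hxn : io x ^+ N != 0 by rewrite expf_neq0 // fmorph_eq0 lt0r_neq0.
  have hsn : io s != 0 by rewrite fmorph_eq0 lt0r_neq0.
  by apply: mulf_neq0 => //; apply: mulf_neq0.
rewrite hT0 mulr0 => /eqP; rewrite mulf_eq0 (negbTE hTN) orbF => /eqP h'0.
have [c [hc Eh]] := proj_eq (etrans (esym Es') Ew2).
by move: Hv2; rewrite Eh mevalZ h'0 mulr0 eqxx.
Qed.
End Main.

Unset Implicit Arguments.
Set Strict Implicit.

Theorem main_generic (R : realType) (K : numFieldType) (io : {rmorphism R -> K}) (n : nat) :
  (forall x, `|io x| = io `|x|) ->
  (forall x y, (io x < io y) = (x < y)) ->
  (forall e : K, 0 < e -> exists d : R, 0 < d /\ io d = e) ->
  (2 <= n)%N ->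
  exists rho : R -> Bir K n,
    bir_continuous_on (fun t : R => -1 <= t <= 1) rho /\
    forall eps : R, 0 < eps -> eps <= 1 ->
    forall d : nat, (1 <= d)%N ->
    ~ exists rho_eps : R -> Wd K n d,
        Hd_continuous_on (fun t : R => - eps < t < eps) rho_eps /\
        forall t : R, - eps < t < eps -> pi_rel (rho_eps t) (rho t).
Proof.
move=> Hnorm Hlt Hpos hn.
exists (rhoT io hn); split; first exact: rho_cont.
move=> eps heps _ d _; exact: no_lift.
Qed.

Theorem proposition1p4 (R : realType) (b : bool) (n : nat) :
  (2 <= n)%N ->
  exists rho : R -> Bir (kfld R b) n,
    bir_continuous_on (fun t : R => -1 <= t <= 1) rho /\
    forall eps : R, 0 < eps -> eps <= 1 ->
    forall d : nat, (1 <= d)%N ->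
    ~ exists rho_eps : R -> Wd (kfld R b) n d,
        Hd_continuous_on (fun t : R => - eps < t < eps) rho_eps /\
        forall t : R, - eps < t < eps -> pi_rel (rho_eps t) (rho t).
Proof.
case: b => hn.
- apply: (@main_generic R (R[i] : numFieldType) (real_complex R : {rmorphism R -> R[i]})) => //.
  + move=> x; rewrite normc_def /=.
    by rewrite expr0n /= addr0 sqrtr_sqr.
  + by move=> x y; rewrite ltcR.
  + case=> a c; rewrite ltcE /= => /andP[/eqP -> ha].
    by exists a.
- apply: (@main_generic R (R : numFieldType) (idfun : {rmorphism R -> R})) => //.
  by move=> e he; exists e.
Qed.
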